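(* Let $J$ be a complex structure on a $2$-step nilpotent real Lie algebra $\mathfrak{n}$ with center $\mathfrak{z}$ and commutator ideal $\mathfrak{n}'$. If $\mathfrak{z}_0$ is an ideal of $\mathfrak{n}$ with $\mathfrak{n}'\subset\mathfrak{z}_0\subset\mathfrak{z}$, then $J\mathfrak{z}_0$ is an abelian ideal of $\mathfrak{n}$.
   Context: A complex structure on a real Lie algebra $\mathfrak{g}$ is a linear map $J:\mathfrak{g}\to\mathfrak{g}$ with $J^2=-I$ and $N_J(x,y):=[x,y]+J([Jx,y]+[x,Jy])-[Jx,Jy]=0$ for all $x,y\in\mathfrak{g}$. A Lie algebra $\mathfrak{n}$ is $2$-step nilpotent if it is non-abelian and $\mathfrak{n}'=[\mathfrak{n},\mathfrak{n}]\subset\mathfrak{z}$. *)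

(* Defs.v *)
From HB Require Import structures.
From mathcomp Require Import all_boot all_order all_algebra.
From mathcomp Require Import reals.
Set Implicit Arguments. Unset Strict Implicit. Unset Printing Implicit Defensive.
Import GRing.Theory.
Local Open Scope ring_scope.

Section LieDefs.
Variables (R : fieldType) (V : lmodType R).

Definition is_lie_bracket (br : V -> V -> V) : Prop :=
  [/\ (forall (a : R) x y z, br (a *: x + y) z = a *: br x z + br y z),
      (forall (a : R) x y z, br z (a *: x + y) = a *: br z x + br z y),
      (forall x, br x x = 0) &
      (forall x y z, br x (br y z) + br y (br z x) + br z (br x y) = 0)].

Definition nijenhuis (br : V -> V -> V) (J : V -> V) (x y : V) : V :=
  br x y + J (br (J x) y + br x (J y)) - br (J x) (J y).

Definition complex_structure (br : V -> V -> V) (J : V -> V) : Prop :=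
  (forall x, J (J x) = - x) /\ (forall x y, nijenhuis br J x y = 0).

Definition in_center (br : V -> V -> V) (x : V) : Prop := forall y, br x y = 0.

Definition two_step_nilpotent (br : V -> V -> V) : Prop :=
  (exists x y, br x y != 0) /\ (forall x y, in_center br (br x y)).
End LieDefs.

Section LieSub.
Variables (R : fieldType) (V : vectType R).

Definition lie_ideal (br : V -> V -> V) (I : {vspace V}) : Prop :=
  forall x y, x \in I -> br x y \in I.

Definition lie_abelian (br : V -> V -> V) (I : {vspace V}) : Prop :=
  forall x y, x \in I -> y \in I -> br x y = 0.

Definition derived_sub (br : V -> V -> V) (I : {vspace V}) : Prop :=
  forall x y, br x y \in I.

Definition sub_center (br : V -> V -> V) (I : {vspace V}) : Prop :=
  forall x, x \in I -> in_center br x.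
End LieSub.

(* Main.v *)
Require Import Defs.
From HB Require Import structures.
From mathcomp Require Import all_boot all_order all_algebra.
From mathcomp Require Import reals.
Import GRing.Theory.
Local Open Scope ring_scope.

Lemma br_anti (R : realType) (V : vectType R) (br : V -> V -> V) :
  is_lie_bracket br -> forall x y, br x y = - br y x.
Proof.
case=> Hl Hr Ha _ x y.
have h1 : forall u v w, br (u + v) w = br u w + br v w.
  by move=> u v w; have := Hl 1 u v w; rewrite !scale1r.
have h2 : forall u v w, br w (u + v) = br w u + br w v.
  by move=> u v w; have := Hr 1 u v w; rewrite !scale1r.
have := Ha (x + y); rewrite h1 !h2 !Ha add0r addr0 => /eqP.
by rewrite addr_eq0 => /eqP.
Qed.

Theorem mainTheorem3 (R : realType) (V : vectType R) (br : V -> V -> V)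
  (J : 'End(V)) (z0 : {vspace V}) :
  is_lie_bracket br ->
  two_step_nilpotent br ->
  complex_structure br J ->
  lie_ideal br z0 ->
  derived_sub br z0 ->
  sub_center br z0 ->
  lie_ideal br (J @: z0)%VS /\ lie_abelian br (J @: z0)%VS.
Proof.
move=> Hb _ [JJ HN] _ Hd Hc.
have key : forall z x, z \in z0 -> br (J z) (J x) = J (br (J z) x).
  move=> z x zin; have := HN z x; rewrite /nijenhuis.
  rewrite (Hc z zin) (Hc z zin) add0r addr0.
  by move/eqP; rewrite subr_eq0 => /eqP.
split.
  move=> w y /memv_imgP [z zin ->].
  have e : y = J (- J y) by rewrite linearN /= JJ opprK.
  rewrite e key //; apply: memv_img; exact: Hd.
move=> w w' /memv_imgP [z zin ->] /memv_imgP [z' zin' ->].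
by rewrite key // (@br_anti _ _ br Hb) (Hc z' zin') oppr0 linear0.
Qed.
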